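(* For each real number $\epsilon>0$ and each integer $m\ge 3$ there is a positive integer $n$ and a subset $S\subseteq\mathbb{Z}/n\mathbb{Z}$ with $|S|\ge(1-\epsilon)n$ such that $S$ is simultaneously $(k,j)$-product-free for all positive integers $k>j$ with $k+j\le m$.
   Context: For positive integers $k,j$, a subset $S\subseteq\mathbb{Z}/n\mathbb{Z}$ is called $(k,j)$-product-free if there is no solution of $a_1a_2\cdots a_k\equiv b_1b_2\cdots b_j\pmod n$ with all $a_1,\dots,a_k,b_1,\dots,b_j\in S$ (not necessarily distinct). *)

(* Defs.v *)
From mathcomp Require Import all_boot.
From Stdlib Require Import Reals.
Set Implicit Arguments. Unset Strict Implicit. Unset Printing Implicit Defensive.

(* Z/nZ is modelled by residues 'I_n (values 0..n-1), n > 0; multiplication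
   is taken modulo n. *)
Definition product_free (n k j : nat) (S : {set 'I_n}) : Prop :=
  ~ exists (a : 'I_k -> 'I_n) (b : 'I_j -> 'I_n),
      (forall i, a i \in S) /\ (forall i, b i \in S) /\
      (\prod_(i < k) (a i : nat) = \prod_(i < j) (b i : nat) %[mod n]).

(* Main.v *)
Require Import Defs.
From mathcomp Require Import all_boot.
From Stdlib Require Import Reals.
From mathcomp Require Import all_order all_algebra.
From mathcomp Require Import zify ring lra.
From mathcomp Require Import ssrnat.
Import Order.TTheory GRing.Theory Num.Theory.

Module Aux.

Section W1.

Lemma sum_dvdS d n : 0 < d -> \sum_(i < n) (d %| i.+1) = n %/ d.
Proof.
move=> d0; elim: n => [|n IH]; first by rewrite big_ord0 div0n.
by rewrite big_ord_recr /= IH (divnS _ d0) addnC.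
Qed.

Lemma sum_dvd d n : 0 < d -> d %| n -> \sum_(i < n) (d %| i) = n %/ d.
Proof.
move=> d0; case: n => [|n] dn; first by rewrite big_ord0 div0n.
by rewrite big_ord_recl /= dvdn0 sum_dvdS // (divnS _ d0) dn.
Qed.

End W1.

Section W2.

Definition Tn (ps : seq nat) (a : nat) : nat := \sum_(p <- ps) (p %| a).

Local Open Scope ring_scope.

Definition mu (ps : seq nat) : rat := \sum_(p <- ps) (p%:R)^-1.

Lemma rsum_dvd n d : (0 < d)%N -> (d %| n)%N ->
  \sum_(i < n) ((d %| i)%N%:R : rat) = n%:R / d%:R.
Proof. by move=> d0 dn; rewrite -natr_sum sum_dvd // natq_div. Qed.

Lemma XX p q (a : nat) : prime p -> prime q ->
  (((p %| a)%N%:R : rat) * (q %| a)%N%:R) = ((if p == q then p else p * q) %| a)%N%:R.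
Proof.
move=> pp pq; case: eqP => [<-|pq'].
  by case: (p %| a)%N; rewrite ?mulr1 ?mulr0.
rewrite Gauss_dvd; last by rewrite prime_coprime // dvdn_prime2 //; apply/eqP.
by case: (p %| a)%N; case: (q %| a)%N; rewrite ?mulr1 ?mulr0 ?mul0r.
Qed.

Lemma second_moment (ps : seq nat) n :
  uniq ps -> all prime ps -> all (fun p => p %| n)%N ps ->
  \sum_(a < n) (((Tn ps a)%:R - mu ps) ^+ 2) <= n%:R * mu ps.
Proof.
move=> ups /allP pps /allP dps.
have p0 : forall p, p \in ps -> (0 < p)%N by move=> p /pps /prime_gt0.
have S1 : \sum_(a < n) ((Tn ps a)%:R : rat) = n%:R * mu ps.
  rewrite /Tn /mu; under eq_bigr do rewrite natr_sum.
  rewrite exchange_big mulr_sumr; apply: eq_big_seq => p pin.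
  by rewrite rsum_dvd ?p0 ?dps.
have S2 : \sum_(a < n) ((Tn ps a)%:R : rat) ^+ 2 <= n%:R * (mu ps ^+ 2 + mu ps).
  rewrite /Tn; under eq_bigr do rewrite natr_sum expr2 big_distrlr /=.
  rewrite exchange_big /=.
  have -> : n%:R * (mu ps ^+ 2 + mu ps) = \sum_(p <- ps) (n%:R * (p%:R^-1 * mu ps) + n%:R / p%:R).
    by rewrite big_split /= -!mulr_sumr -mulr_suml -mulrDr expr2.
  rewrite big_seq_cond [X in _ <= X]big_seq_cond; apply: ler_sum => p /andP[pin _].
  rewrite exchange_big /=.
  rewrite (bigD1_seq p pin ups) /= addrC; apply: lerD; last first.
    under eq_bigr do rewrite XX ?pps // eqxx.
    by rewrite rsum_dvd ?p0 ?dps // le_refl.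
  rewrite /mu mulr_sumr mulr_sumr big_mkcond /= big_seq [X in _ <= X]big_seq.
  apply: ler_sum => q qin.
  case: eqP => [_|/eqP qp]; first by rewrite !mulr_ge0 ?invr_ge0 ?ler0n.
  have qp' : (p == q) = false by apply/negbTE; rewrite eq_sym.
  under eq_bigr do rewrite XX ?pps // qp'.
  rewrite rsum_dvd ?muln_gt0 ?p0 //; last first.
    by rewrite Gauss_dvd ?dps // prime_coprime ?pps // dvdn_prime2 ?pps // qp'.
  by rewrite natrM invfM mulrA.
under eq_bigr do rewrite sqrrB.
rewrite big_split /= sumrB sumrMnl -mulr_suml S1 sumr_const card_ord.
rewrite -[_ *+ 2]mulr_natr -[mu ps ^+ 2 *+ n]mulr_natr.
move: S2; set A := \sum_(a < n) _; set m := mu ps; set N := n%:R => S2.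
have -> : A - N * m * m * 2 + m ^+ 2 * N = A - N * m ^+ 2 by rewrite expr2; ring.
rewrite lerBlDr -mulrDr addrC; exact: S2.
Qed.

End W2.

Section W3.
Local Open Scope ring_scope.

Definition good (ps : seq nat) (D : rat) (a : nat) : bool :=
  all (fun p => ~~ (p ^ 2 %| a)%N) ps && (((Tn ps a)%:R - mu ps) ^+ 2 <= D ^+ 2).

Lemma good_pt ps D (a : nat) : 0 < D ->
  ((good ps D a)%:R : rat) >= 1 - \sum_(p <- ps) ((p ^ 2 %| a)%N)%:R - ((Tn ps a)%:R - mu ps) ^+ 2 / D ^+ 2.
Proof.
move=> D0; rewrite /good.
have h1 : 0 <= \sum_(p <- ps) (((p ^ 2 %| a)%N)%:R : rat) by apply: sumr_ge0 => *; exact: ler0n.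
have h2 : 0 <= ((Tn ps a)%:R - mu ps) ^+ 2 / D ^+ 2 by rewrite divr_ge0 ?sqr_ge0.
case: (boolP (all _ ps)) => [H|/allPn [p pin]] /=; last first.
  rewrite negbK => pa.
  have : 1 <= \sum_(p <- ps) (((p ^ 2 %| a)%N)%:R : rat).
    rewrite (big_rem p pin) /= pa -[X in X <= _]addr0 lerD2l.
    by apply: sumr_ge0 => *; exact: ler0n.
  move=> h3; lra.
case: (boolP (((Tn ps a)%:R - mu ps) ^+ 2 <= D ^+ 2)) => Hle /=; first lra.
have : 1 < ((Tn ps a)%:R - mu ps) ^+ 2 / D ^+ 2.
  by rewrite ltr_pdivlMr ?exprn_gt0 // mul1r ltNge.
lra.
Qed.

Lemma density ps n D : 0 < D -> uniq ps -> all prime ps ->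
  all (fun p => p ^ 2 %| n)%N ps ->
  (#|[set a : 'I_n | good ps D a]|%:R : rat) >=
    n%:R - \sum_(p <- ps) n%:R / (p ^ 2)%N%:R - n%:R * mu ps / D ^+ 2.
Proof.
move=> D0 ups pps dps.
have dps' : all (fun p => p %| n)%N ps.
  by apply/allP => p /(allP dps); apply: dvdn_trans; rewrite dvdn_exp.
have SM := second_moment ps n ups pps dps'.
have -> : (#|[set a : 'I_n | good ps D a]|%:R : rat) = \sum_(a < n) (good ps D a)%:R.
  rewrite -natr_sum; congr (_%:R); rewrite -sum1_card big_mkcond /=.
  by apply: eq_bigr => a _; rewrite inE; case: (good _ _ _).
have H : \sum_(a < n) (1 - \sum_(p <- ps) ((p ^ 2 %| a)%N)%:R - ((Tn ps a)%:R - mu ps) ^+ 2 / D ^+ 2) <= \sum_(a < n) ((good ps D a)%:R : rat).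
  by apply: ler_sum => a _; exact: good_pt.
apply: le_trans H.
rewrite !sumrB sumr_const card_ord.
rewrite exchange_big /= -mulr_suml.
have -> : \sum_(p <- ps) \sum_(i < n) (((p ^ 2 %| i)%N)%:R : rat) = \sum_(p <- ps) n%:R / (p ^ 2)%N%:R.
  apply: eq_big_seq => p pin; rewrite rsum_dvd //; last exact: (allP dps).
  by rewrite expn_gt0 prime_gt0 //; exact: (allP pps).
apply: lerB => //; apply: ler_pM => //; first by apply: sumr_ge0 => *; exact: sqr_ge0.
by rewrite invr_ge0 sqr_ge0.
Qed.

End W3.

Section W4.

Definition smooth (P0 y : nat) : bool := all (fun p => p <= P0) (primes y).

Lemma logn_bound p y M : 0 < y -> y <= 2 ^ M -> logn p y <= M.
Proof.
move=> y0 yM; case pp: (prime p); last by rewrite /logn pp.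
have h : p ^ logn p y <= y by apply: dvdn_leq => //; rewrite pfactor_dvdn.
rewrite -(leq_exp2l _ _ (isT : 1 < 2)); apply: (leq_trans _ yM); apply: (leq_trans _ h).
by case: (logn p y) => [//|l]; rewrite leq_exp2r ?prime_gt1.
Qed.

Lemma smooth_logn P0 y p : smooth P0 y -> P0 < p -> logn p y = 0.
Proof.
move=> /allP s hp; apply/eqP; rewrite -leqn0 leqNgt logn_gt0; apply/negP => /s.
by rewrite leqNgt hp.
Qed.

Lemma smooth_count P0 M :
  #|[set x : 'I_(2 ^ M) | smooth P0 x.+1]| <= M.+1 ^ P0.+1.
Proof.
set A := [set x : 'I_(2 ^ M) | smooth P0 x.+1].
pose f (x : 'I_(2 ^ M)) : {ffun 'I_P0.+1 -> 'I_M.+1} := [ffun i : 'I_P0.+1 => inord (logn i x.+1)].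
have fi : {in A &, injective f}.
  move=> x y; rewrite !inE => sx sy fxy; apply: val_inj; apply: succn_inj.
  apply: eqn_from_log => // p.
  case: (leqP p P0) => hp.
    have := congr1 (fun g : {ffun 'I_P0.+1 -> 'I_M.+1} => val (g (Ordinal (hp : p < P0.+1)))) fxy.
    rewrite !ffunE /= !inordK //; rewrite ltnS; apply: logn_bound => //; exact: ltn_ord.
  by rewrite (@smooth_logn _ _ _ sx hp) (@smooth_logn _ _ _ sy hp).
by have := max_card [set f x | x in A]; rewrite card_in_imset // card_ffun !card_ord.
Qed.

Lemma nonsmooth_count P0 N :
  \sum_(x < N) (~~ smooth P0 x.+1) <= \sum_(P0.+1 <= p < N.+1 | prime p) N %/ p.
Proof.
have -> : \sum_(P0.+1 <= p < N.+1 | prime p) N %/ p =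
          \sum_(P0.+1 <= p < N.+1 | prime p) \sum_(x < N) (p %| x.+1).
  by apply: eq_bigr => p pp; rewrite sum_dvdS // prime_gt0.
rewrite exchange_big /=; apply: leq_sum => x _.
case: (boolP (smooth P0 x.+1)) => // /allPn [p]; rewrite mem_primes => /and3P [pp _ pd].
rewrite -ltnNge => hp.
have pN : p < N.+1 by rewrite ltnS; apply: leq_trans (dvdn_leq _ pd) _; rewrite ?ltn_ord.
rewrite big_mkcond (bigD1_seq p) ?mem_index_iota ?hp ?iota_uniq //= pp pd.
exact: leq_addr.
Qed.

Lemma aux_exp t : (t + 6) * (t + 1) + 1 <= 2 ^ (t + 5).
Proof.
elim: t => [//|t IH].
have h := ltn_expl t (isT : 1 < 2).
have e1 : 2 ^ (t.+1 + 5) = 2 * 2 ^ (t + 5) by rewrite addSn expnS.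
have e2 : 2 ^ (t + 5) = 32 * 2 ^ t by rewrite expnD mulnC.
rewrite e1; rewrite e2 in IH *; nia.
Qed.

Lemma big_bound P0 : 2 * (2 ^ (P0 + 5)).+1 ^ P0.+1 <= 2 ^ (2 ^ (P0 + 5)).
Proof.
have h1 : (2 ^ (P0 + 5)).+1 <= 2 ^ (P0 + 6).
  rewrite (_ : P0 + 6 = (P0 + 5).+1) ?expnS; last by lia.
  have := expn_gt0 2 (P0 + 5); lia.
apply: (@leq_trans (2 * (2 ^ (P0 + 6)) ^ P0.+1)).
  by rewrite leq_mul2l leq_exp2r.
rewrite -expnM -expnS leq_exp2l //.
have := aux_exp P0; lia.
Qed.

Lemma block_nat P0 (M := 2 ^ (P0 + 5)) (N := 2 ^ M) :
  N <= N %/ 2 + \sum_(P0.+1 <= p < N.+1 | prime p) N %/ p.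
Proof.
have hs : \sum_(x < N) (smooth P0 x.+1 : nat) <= N %/ 2.
  have -> : \sum_(x < N) (smooth P0 x.+1 : nat) = #|[set x : 'I_N | smooth P0 x.+1]|.
    rewrite -sum1_card [RHS]big_mkcond /=.
    by apply: eq_bigr => a _; rewrite inE; case: (smooth _ _).
  apply: leq_trans (smooth_count P0 M) _.
  rewrite leq_divRL //; rewrite mulnC; exact: big_bound.
have e : N = \sum_(x < N) (smooth P0 x.+1 : nat) + \sum_(x < N) (~~ smooth P0 x.+1 : nat).
  rewrite -big_split /=; transitivity (\sum_(x < N) 1)%N.
    by rewrite big_const_ord iter_addn_0 mul1n.
  by apply: eq_bigr => x _; case: (smooth _ _).
rewrite [X in X <= _]e; apply: leq_add => //; exact: nonsmooth_count.
Qed.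

Local Open Scope ring_scope.

Lemma block P0 : exists K, (P0 < K)%N /\
  1 / 2 <= \sum_(P0.+1 <= p < K | prime p) (p%:R : rat)^-1.
Proof.
pose M := (2 ^ (P0 + 5))%N; pose N := (2 ^ M)%N.
have N0 : (0 < N)%N by rewrite expn_gt0.
have PN : (P0 < N.+1)%N.
  rewrite ltnS; apply: ltnW; apply: (@leq_trans (2 ^ P0)); first exact: ltn_expl.
  rewrite leq_exp2l //; apply: ltnW; apply: (@leq_trans (2 ^ P0)); first exact: ltn_expl.
  by rewrite leq_exp2l // leq_addr.
exists N.+1; split => //.
have H := block_nat P0.
have H1 : (N%:R : rat) <= (N %/ 2)%:R + \sum_(P0.+1 <= p < N.+1 | prime p) ((N %/ p)%:R : rat).
  by rewrite -natr_sum -natrD ler_nat.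
have H2 : ((N %/ 2)%:R : rat) <= N%:R / 2.
  by rewrite ler_pdivlMr // -natrM ler_nat leq_trunc_div.
have H3 : \sum_(P0.+1 <= p < N.+1 | prime p) ((N %/ p)%:R : rat) <= N%:R * \sum_(P0.+1 <= p < N.+1 | prime p) (p%:R : rat)^-1.
  rewrite mulr_sumr; apply: ler_sum => p pp.
  by rewrite ler_pdivlMr ?ltr0n ?prime_gt0 // -natrM ler_nat leq_trunc_div.
have NR : (0 : rat) < N%:R by rewrite ltr0n.
set s := \sum_(P0.+1 <= p < N.+1 | prime p) (p%:R : rat)^-1 in H3 *.
have : N%:R * (1 / 2) <= N%:R * s by lra.
by rewrite ler_pM2l.
Qed.

Lemma supply P0 (B : nat) : exists K, (P0 < K)%N /\
  B%:R / 2 <= \sum_(P0.+1 <= p < K | prime p) (p%:R : rat)^-1.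
Proof.
elim: B => [|B [K [PK IH]]].
  exists P0.+1; split => //; rewrite mul0r; apply: sumr_ge0 => p _.
  by rewrite invr_ge0 ler0n.
have [K' [KK' H]] := block K.-1.
have K0 : (0 < K)%N by apply: leq_ltn_trans PK.
rewrite prednK // in H KK'.
exists K'; split; first exact: leq_trans PK KK'.
rewrite (big_cat_nat PK KK') /=.
rewrite -addn1 natrD mulrDl; exact: lerD.
Qed.

Lemma sq_tail P0 K : (0 < P0)%N ->
  \sum_(P0.+1 <= x < K) ((x ^ 2)%N%:R : rat)^-1 <= P0%:R^-1.
Proof.
move=> P0p.
have H : forall t, \sum_(P0.+1 <= x < P0.+1 + t) ((x ^ 2)%N%:R : rat)^-1 <= P0%:R^-1 - (P0 + t)%:R^-1.
  elim => [|t IH]; first by rewrite !addn0 big_geq // subrr.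
  rewrite addnS big_nat_recr /=; last by rewrite leq_addr.
  apply: le_trans (lerD IH (lexx _)) _.
  rewrite addnS -addrA lerD2l.
  set a := (P0 + t)%N.
  have a0 : (0 < a)%N by rewrite addn_gt0 P0p.
  rewrite -addSn -/a natrX.
  have ha : (0 : rat) < a%:R by rewrite ltr0n.
  rewrite addSn -/a -addn1 natrD.
  set x := (a%:R : rat).
  have x0 : x != 0 by rewrite gt_eqF.
  have x1 : x + 1 != 0 by rewrite gt_eqF // ltr_wpDr.
  rewrite -subr_ge0.
  have -> : - (x + 1)^-1 - (- x^-1 + (x + 1) ^- 2) = (x * (x + 1) ^+ 2)^-1 by field; rewrite x0 x1.
  by rewrite invr_ge0 mulr_ge0 ?sqr_ge0 // ltW.
case: (leqP K P0.+1) => hK.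
  rewrite big_geq //; by rewrite invr_ge0 ler0n.
have := H (K - P0.+1)%N; rewrite subnKC; last exact: ltnW.
move=> h; apply: le_trans h _; rewrite lerBlDr lerDl invr_ge0 ler0n //.
Qed.

End W4.

Section W5.

Lemma logn_eq_mod p e A B : prime p -> 0 < A -> 0 < B -> A = B %[mod p ^ e] ->
  logn p A < e -> logn p B < e -> logn p A = logn p B.
Proof.
move=> pp A0 B0 AB hA hB.
wlog lt : A B A0 B0 AB hA hB / logn p A < logn p B.
  move=> W; case: (ltngtP (logn p A) (logn p B)) => // h.
    exact: W.
  by apply/esym; apply: W.
exfalso.
have d : p ^ (logn p A).+1 %| p ^ e by rewrite dvdn_exp2l.
have hB' : p ^ (logn p A).+1 %| B by rewrite pfactor_dvdn.
have : p ^ (logn p A).+1 %| A.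
  by rewrite /dvdn -(modn_dvdm A d) AB modn_dvdm // -/(dvdn _ _) hB'.
by rewrite pfactor_dvdn // ltnn.
Qed.

Lemma logn_prod p k (F : 'I_k -> nat) : prime p -> (forall i, 0 < F i) ->
  logn p (\prod_(i < k) F i) = \sum_(i < k) logn p (F i).
Proof.
move=> pp F0; elim: k F F0 => [|k IH] F F0; first by rewrite !big_ord0 logn1.
rewrite !big_ord_recr /= lognM ?IH //; last exact: prodn_gt0.
Qed.

Lemma logn_sqfree p a : prime p -> 0 < a -> ~~ (p ^ 2 %| a) -> logn p a = (p %| a).
Proof.
move=> pp a0 h; case: (boolP (p %| a)) => pa.
  apply/eqP; rewrite eqn_leq; apply/andP; split.
    by move: h; rewrite pfactor_dvdn // -ltnNge ltnS.
  by rewrite -pfactor_dvdn // expn1.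
by apply/eqP; rewrite -leqn0 leqNgt -(pfactor_dvdn 1 pp a0) expn1.
Qed.

Local Open Scope ring_scope.

Lemma sq_bound (x m D : rat) : (x - m) ^+ 2 <= D ^+ 2 -> 0 <= D -> m - D <= x <= m + D.
Proof.
move=> h D0; rewrite -(real_normK (num_real (x - m))) in h; rewrite ler_sqr ?normr_ge0 // in h.
by move: h; rewrite ler_norml; case/andP => h1 h2; apply/andP; split; lra.
by rewrite nnegrE normr_ge0.
Qed.

Lemma pf_main ps e n k j (D : rat) (S : {set 'I_n}) :
  all prime ps -> 0 < mu ps -> 0 <= D -> (2 * j%:R + 1) * D < mu ps ->
  (0 < j)%N -> (j < k)%N -> (k < e)%N ->
  (forall p, p \in ps -> (p ^ e %| n)%N) ->
  (forall x : 'I_n, x \in S -> good ps D x) ->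
  product_free k j S.
Proof.
move=> /allP pps mu0 D0 hD j0 jk ke dn gS [a [b [Ha [Hb Hmod]]]].
have ga i : good ps D (a i) by apply: gS.
have gb i : good ps D (b i) by apply: gS.
have [p0 p0in] : exists p0, p0 \in ps.
  case: ps pps mu0 {hD dn ga gb gS} => [|p ps'] _; first by rewrite /mu big_nil ltxx.
  by exists p; rewrite inE eqxx.
have pos x : good ps D x -> (0 < x)%N.
  move=> /andP [/allP h _]; have := h p0 p0in; case: x {h} => //.
  by rewrite dvdn0.
have key : forall p, p \in ps -> (\sum_(i < k) (p %| a i))%N = (\sum_(i < j) (p %| b i))%N.
  move=> p pin; have pp := pps p pin.
  have eA : logn p (\prod_(i < k) (a i : nat))%N = (\sum_(i < k) (p %| a i))%N.
    rewrite logn_prod //; last by move=> i; apply: pos.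
    apply: eq_bigr => i _; apply: logn_sqfree => //; first exact: pos.
    by case/andP: (ga i) => /allP h _; apply: h.
  have eB : logn p (\prod_(i < j) (b i : nat))%N = (\sum_(i < j) (p %| b i))%N.
    rewrite logn_prod //; last by move=> i; apply: pos.
    apply: eq_bigr => i _; apply: logn_sqfree => //; first exact: pos.
    by case/andP: (gb i) => /allP h _; apply: h.
  rewrite -eA -eB; apply: (@logn_eq_mod p e) => //.
  - by apply: prodn_gt0 => i; apply: pos.
  - by apply: prodn_gt0 => i; apply: pos.
  - by rewrite -(modn_dvdm _ (dn p pin)) Hmod (modn_dvdm _ (dn p pin)).
  - rewrite eA; apply: leq_ltn_trans ke.
    apply: (@leq_trans (\sum_(i<k) 1)%N); first by apply: leq_sum => i _; exact: leq_b1.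
    by rewrite big_const_ord iter_addn_0 mul1n.
  - rewrite eB; apply: (leq_ltn_trans _ (ltn_trans jk ke)).
    apply: (@leq_trans (\sum_(i<j) 1)%N); first by apply: leq_sum => i _; exact: leq_b1.
    by rewrite big_const_ord iter_addn_0 mul1n.
have eT : (\sum_(i < k) Tn ps (a i))%N = (\sum_(i < j) Tn ps (b i))%N.
  rewrite /Tn exchange_big [RHS]exchange_big /=.
  by apply: eq_big_seq => p pin; apply: key.
have bA i : mu ps - D <= (Tn ps (a i))%:R.
  by case/andP: (ga i) => _ /sq_bound /(_ D0) /andP [].
have bB i : (Tn ps (b i))%:R <= mu ps + D.
  by case/andP: (gb i) => _ /sq_bound /(_ D0) /andP [].
have sA : k%:R * (mu ps - D) <= (\sum_(i < k) Tn ps (a i))%N%:R.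
  rewrite natr_sum; apply: le_trans (ler_sum _ (fun i _ => bA i)).
  by rewrite sumr_const card_ord mulr_natl.
have sB : (\sum_(i < j) Tn ps (b i))%N%:R <= j%:R * (mu ps + D).
  rewrite natr_sum; apply: le_trans (ler_sum _ (fun i _ => bB i)) _.
  by rewrite sumr_const card_ord mulr_natl.
rewrite eT in sA.
have hk : (j%:R + 1) * (mu ps - D) <= k%:R * (mu ps - D).
  have : 0 <= j%:R * D by rewrite mulr_ge0 ?ler0n.
  move=> jD; apply: ler_wpM2r; first lra.
  by rewrite natr1 ler_nat.
have := le_trans sA sB.
have : 0 <= j%:R * D by rewrite mulr_ge0 ?ler0n.
lra.
Qed.

End W5.

Section W6.

Local Open Scope ring_scope.

Lemma final_rat (N m : nat) : (0 < N)%N -> (3 <= m)%N ->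
  exists (n : nat) (S : {set 'I_n}),
    (0 < n)%N /\ (N * n <= N * #|S| + n)%N /\
    (forall k j : nat, (0 < j)%N -> (j < k)%N -> (k + j <= m)%N -> product_free k j S).
Proof.
move=> N0 m3.
have [K [PK HK]] := supply (4 * N) (64 * m ^ 2 * N).
pose ps := [seq p <- index_iota (4 * N).+1 K | prime p].
pose e := m.+1.
pose n := (\prod_(p <- ps) p ^ e)%N.
have pps : all prime ps by apply: filter_all.
have ups : uniq ps by apply: filter_uniq; apply: iota_uniq.
have emu : mu ps = \sum_((4 * N).+1 <= p < K | prime p) (p%:R : rat)^-1 by rewrite /mu big_filter.
have dn : forall p, p \in ps -> (p ^ e %| n)%N.
  by move=> p pin; rewrite /n (big_rem p pin) /= dvdn_mulr.
have n0 : (0 < n)%N.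
  rewrite /n big_seq_cond; apply: prodn_cond_gt0 => p /andP [pin _].
  by rewrite expn_gt0 prime_gt0 //; apply: (allP pps).
set M := mu ps.
have Mbig : (32 * m ^ 2 * N)%N%:R <= M.
  rewrite /M emu; apply: le_trans HK.
  by rewrite ler_pdivlMr // -natrM ler_nat; lia.
have m0 : (0 : rat) < m%:R by rewrite ltr0n; lia.
have N0r : (0 : rat) < N%:R by rewrite ltr0n.
have M0 : 0 < M.
  apply: lt_le_trans Mbig; rewrite ltr0n.
  have h2 : (0 < m)%N by lia.
  by rewrite !muln_gt0 h2 N0.
pose D := M / (4 * m%:R).
have D0 : 0 < D by rewrite divr_gt0 // mulr_gt0.
exists n, [set a : 'I_n | good ps D a]; split => //; split; last first.
  move=> k j j0 jk kjm; apply: (@pf_main ps e n k j D) => //.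
  - exact: ltW.
  - have hj : (2 * j%:R + 1 : rat) <= m%:R.
      have : (2 * j + 1 <= m)%N by lia.
      by rewrite -(ler_nat rat) natrD natrM.
    have hD : 0 < M / (4 * m%:R) by rewrite divr_gt0 // mulr_gt0.
    apply: le_lt_trans (ler_wpM2r (ltW hD) hj) _.
    have -> : m%:R * (M / (4 * m%:R)) = M / 4 by field; rewrite gt_eqF.
    rewrite -/M; lra.
  - rewrite /e; lia.
  - by move=> x; rewrite inE.
have dps2 : all (fun p => p ^ 2 %| n)%N ps.
  apply/allP => p pin; apply: dvdn_trans (dn p pin).
  by rewrite dvdn_exp2l // /e; lia.
have dens := density ps n D D0 ups pps dps2; rewrite -/M in dens.
have sq : \sum_(p <- ps) (n%:R : rat) / (p ^ 2)%N%:R <= n%:R / (4 * N)%N%:R.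
  have -> : \sum_(p <- ps) (n%:R : rat) / (p ^ 2)%N%:R = n%:R * \sum_(p <- ps) ((p ^ 2)%N%:R : rat)^-1.
    by rewrite mulr_sumr.
  rewrite ler_wpM2l ?ler0n //.
  rewrite /ps big_filter.
  apply: le_trans (sq_tail (4 * N) K _); last by rewrite muln_gt0 N0.
  rewrite big_mkcond /=; apply: ler_sum => x _.
  by case: (prime x) => //; rewrite invr_ge0 ler0n.
have b1 : n%:R * M / D ^+ 2 <= n%:R / (2 * N)%N%:R.
  have -> : n%:R * M / D ^+ 2 = n%:R * (16 * m%:R ^+ 2 / M).
    by rewrite /D; field; rewrite !gt_eqF.
  rewrite ler_wpM2l ?ler0n // natrM.
  rewrite ler_pdivrMr // [_^-1 * _]mulrC ler_pdivlMr ?mulr_gt0 //.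
  apply: le_trans Mbig; rewrite !natrM expr2 -!mulrA; lra.
have hS : n%:R - n%:R / N%:R <= (#|[set a : 'I_n | good ps D a]|%:R : rat).
  apply: le_trans dens.
  have e1 : (n%:R : rat) / (4 * N)%N%:R = n%:R / N%:R / 4 by rewrite natrM; field; rewrite gt_eqF.
  have e2 : (n%:R : rat) / (2 * N)%N%:R = n%:R / N%:R / 2 by rewrite natrM; field; rewrite gt_eqF.
  have : 0 <= (n%:R : rat) / N%:R by rewrite divr_ge0 ?ler0n.
  lra.
rewrite -(ler_nat rat) natrD !natrM.
have h' := ler_wpM2l (ltW N0r) hS.
have e3 : N%:R * (n%:R / N%:R) = (n%:R : rat) by field; rewrite gt_eqF.
lra.
Qed.

End W6.

End Aux.

From Stdlib Require Import Reals Lra Psatz.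

Theorem theorem3p1 (eps : R) (m : nat) :
  (0 < eps)%R -> 3 <= m ->
  exists (n : nat) (S : {set 'I_n}),
    0 < n /\
    (INR #|S| >= (1 - eps) * INR n)%R /\
    (forall k j : nat, 0 < j -> j < k -> k + j <= m -> product_free k j S).
Proof.
move=> heps hm.
have [N HN] := INR_archimed eps 1 heps.
have N0 : (0 < N)%N.
  case: N HN => [|N] //= HN; exfalso; rewrite Rmult_0_l in HN; Stdlib.micromega.Lra.lra.
have [n [S [n0 [Hc Hpf]]]] := Aux.final_rat N m N0 hm.
exists n, S; split => //; split => //.
have H := le_INR _ _ (elimT ssrnat.leP Hc).
rewrite plus_INR !mult_INR in H.
have HN0 : (0 < INR N)%R by apply: lt_0_INR; apply/ssrnat.ltP.
have Hn0 : (0 <= INR n)%R by apply: pos_INR.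
have Hs0 : (0 <= INR #|S|)%R by apply: pos_INR.
Stdlib.micromega.Psatz.nra.
Qed.
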